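(* Let $\mathcal{F}$ be a $3$-uniform linear family and let $\mathcal{M}$ be a maximum matching of $\mathcal{F}$. If $A,B,C$ are three distinct members of $\mathcal{M}$, then $|D_2(A,B,C)|\leq 21$.
   Context: A family is a finite collection of distinct subsets of a vertex set; $3$-uniform means every member has exactly $3$ elements and linear means any two distinct members share at most one vertex. A matching is a collection of pairwise disjoint members; a maximum matching is one of largest possible size. $X_{\mathcal{M}}=\bigcup_{A\in\mathcal{M}}A$, $D_2(\mathcal{F})=\{E\in\mathcal{F}:|E\cap X_{\mathcal{M}}|=2\}$, and for $A,B,C\in\mathcal{M}$, $D_2(A,B,C)=\{E\in D_2(\mathcal{F}): |E\cap(A\cup B\cup C)|=2\}$. *)

(* Defs.v *)
From mathcomp Require Import all_boot.
Set Implicit Arguments. Unset Strict Implicit. Unset Printing Implicit Defensive.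

Section Defs.
Variable T : finType.

Definition uniform3 (F : {set {set T}}) : Prop :=
  forall E, E \in F -> #|E| = 3.

Definition linear_family (F : {set {set T}}) : Prop :=
  forall E E', E \in F -> E' \in F -> E != E' -> #|E :&: E'| <= 1.

Definition is_matching (F M : {set {set T}}) : Prop :=
  M \subset F /\
  forall A B, A \in M -> B \in M -> A != B -> [disjoint A & B].

Definition is_maximum_matching (F M : {set {set T}}) : Prop :=
  is_matching F M /\ forall M', is_matching F M' -> #|M'| <= #|M|.

Definition XM (M : {set {set T}}) : {set T} := \bigcup_(A in M) A.

Definition D2 (F M : {set {set T}}) : {set {set T}} :=
  [set E in F | #|E :&: XM M| == 2].

Definition D2ABC (F M : {set {set T}}) (A B C : {set T}) : {set {set T}} :=
  [set E in D2 F M | #|E :&: (A :|: B :|: C)| == 2].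

End Defs.

(* Main.v *)
From Stdlib Require Import NArith.
From mathcomp Require Import all_boot zify.
Require Import Defs.
Set Implicit Arguments. Unset Strict Implicit. Unset Printing Implicit Defensive.

Definition part (n : nat) := n %/ 3.
Definition SL : seq (nat * nat) :=
  [seq p <- [seq (i, j) | i <- iota 0 9, j <- iota 0 9] | (p.1 < p.2) && (part p.1 != part p.2)].
Definition idx (i j : nat) : nat := index (minn i j, maxn i j) SL.
Definition mask (l : seq nat) : N := foldr (fun n m => N.setbit m (N.of_nat n)) N0 l.
Definition Ppairs : seq (nat * nat) :=
  [:: (0,3);(0,4);(0,5);(0,6);(1,3);(1,4);(1,5);(1,6);(2,3);(2,4);(3,6);(4,7);(5,8)].
Definition Kpairs : seq (nat * nat) := [seq (i, j) | i <- iota 0 3, j <- iota 3 3].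
Definition img (pat : seq (nat * nat)) (pi : seq nat) : seq nat :=
  [seq idx (nth 0 pi p.1) (nth 0 pi p.2) | p <- pat].
Fixpoint popp (p : positive) : nat := match p with xH => 1 | xO p => popp p | xI p => (popp p).+1 end.
Definition popc (x : N) : nat := match x with N0 => 0 | Npos p => popp p end.
Definition bits (x : N) : seq nat := filter (fun i => N.testbit x (N.of_nat i)) (iota 0 27).

Fixpoint allacc (f : N -> nat -> bool) (l : seq nat) (ex : N) : bool :=
  match l with [::] => true | s :: l' => f ex s && allacc f l' (N.setbit ex (N.of_nat s)) end.

Definition pickbest (ex : N) (S0 : N) (c : seq N) : N :=
  foldl (fun b S => if popc (N.ldiff S ex) < popc (N.ldiff b ex) then S else b) S0 c.

Fixpoint hit (fm : seq N) (k : nat) (ch ex : N) : bool :=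
  let cands := filter (fun S => N.eqb (N.land S ch) N0) fm in
  if has (fun S => N.eqb (N.ldiff S ex) N0) cands then true else
  match cands with
  | [::] => false
  | S0 :: _ =>
    match k with
    | 0 => true
    | k'.+1 => allacc (fun ex s => hit fm k' (N.setbit ch (N.of_nat s)) ex)
                      (bits (N.ldiff (pickbest ex S0 cands) ex)) ex
    end
  end.


Lemma tb_setbit a s n : N.testbit (N.setbit a (N.of_nat s)) (N.of_nat n) = (n == s) || N.testbit a (N.of_nat n).
Proof.
case: (eqVneq n s) => [->|ne]; first by rewrite N.setbit_eq.
rewrite N.setbit_neq //= => /Nat2N.inj E; by rewrite E eqxx in ne.
Qed.

Lemma tb_mask l n : N.testbit (mask l) (N.of_nat n) = (n \in l).
Proof. elim: l => [|x l IH] //. by rewrite /mask /= -/(mask l) tb_setbit IH in_cons. Qed.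

Lemma eqb0 a : N.eqb a N0 -> a = N0.
Proof. by move/N.eqb_eq. Qed.

Lemma land0 a b n : N.eqb (N.land a b) N0 -> N.testbit a n -> ~~ N.testbit b n.
Proof. move/eqb0 => H ha; have := N.land_spec a b n; by rewrite H N.bits_0 ha /= => <-. Qed.

Lemma ldiff0 a b n : N.eqb (N.ldiff a b) N0 -> N.testbit a n -> N.testbit b n.
Proof. move/eqb0 => H ha; have := N.ldiff_spec a b n; rewrite H N.bits_0 ha /=. by case: (N.testbit b n). Qed.

Lemma pickbest_in ex S0 c : pickbest ex S0 c \in S0 :: c.
Proof.
rewrite /pickbest; elim: c S0 => [|x c IH] S0 /=; first by rewrite mem_seq1.
case: ifP => _.
- have := IH x; rewrite !in_cons => /orP [H|H]; by rewrite H ?orbT.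
- have := IH S0; rewrite !in_cons => /orP [H|H]; by rewrite H ?orbT.
Qed.

Lemma allacc_has f l ex (q : nat -> bool) : allacc f l ex ->
  (forall n, N.testbit ex (N.of_nat n) -> ~~ q n) -> has q l ->
  exists ex' s, [/\ f ex' s, q s, s \in l & forall n, N.testbit ex' (N.of_nat n) -> ~~ q n].
Proof.
elim: l ex => [//|s l IH] ex /= /andP [Hf Ha] Hex /orP [qs|hq].
- by exists ex, s; rewrite mem_head.
- case: (boolP (q s)) => qs; first by exists ex, s; rewrite mem_head.
  have Hex' : forall n, N.testbit (N.setbit ex (N.of_nat s)) (N.of_nat n) -> ~~ q n.
    by move=> n; rewrite tb_setbit => /orP [/eqP -> //|]; exact: Hex.
  have [ex' [s' [H1 H2 H3 H4]]] := IH _ Ha Hex' hq.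
  by exists ex', s'; rewrite in_cons H3 orbT.
Qed.

Lemma count_split (a b : pred nat) l : count a l = count (predI a b) l + count (predI a (predC b)) l.
Proof. elim: l => //= x l ->; case: (a x); case: (b x) => /=; rewrite ?addnS ?addSn ?addn0 //. Qed.

Lemma hit_sound fm k ch ex (q : nat -> bool) :
  hit fm k ch ex ->
  (forall n, N.testbit ch (N.of_nat n) -> q n) ->
  (forall n, N.testbit ex (N.of_nat n) -> ~~ q n) ->
  (forall n, q n -> n < 27) ->
  count (fun n => q n && ~~ N.testbit ch (N.of_nat n)) (iota 0 27) <= k ->
  exists2 S, S \in fm & forall n, N.testbit S (N.of_nat n) -> ~~ q n.
Proof.
elim: k ch ex => [|k IH] ch ex; simpl hit; set cands := filter _ fm;
  (case: ifP => [/hasP [S HS HS0] _ Hch Hex Hq Hc | _]);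
  try (exists S; [by move: HS; rewrite mem_filter => /andP [] | move=> n HSn; apply: Hex; exact: ldiff0 HS0 HSn]).
- case Ec: cands => [//|S0 c] _ Hch Hex Hq Hc.
  have : S0 \in cands by rewrite Ec mem_head.
  rewrite mem_filter => /andP [HS0 HS0f]; exists S0 => // n Hn; apply/negP => qn.
  have Hc0 : ~~ N.testbit ch (N.of_nat n) by exact: land0 HS0 Hn.
  have : 0 < count (fun n => q n && ~~ N.testbit ch (N.of_nat n)) (iota 0 27).
    by rewrite -has_count; apply/hasP; exists n; rewrite ?mem_iota ?qn ?Hc0 //= Hq.
  by rewrite lt0n; move: Hc; rewrite leqn0 => ->.
- case Ec: cands => [//|S0 c] Hall Hch Hex Hq Hc.
  set best := pickbest ex S0 (S0 :: c) in Hall.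
  have : best \in cands.
    rewrite Ec; have := pickbest_in ex S0 (S0 :: c); rewrite -/best in_cons => /orP [/eqP ->|//].
    by rewrite mem_head.
  rewrite mem_filter => /andP [Hb Hbf].
  case: (boolP (has q (bits (N.ldiff best ex)))) => Hh; last first.
    exists best => // n Hn; apply/negP => qn.
    case: (boolP (N.testbit ex (N.of_nat n))) => He; first by move: (Hex _ He); rewrite qn.
    move/hasP: Hh; apply; exists n => //.
    rewrite mem_filter N.ldiff_spec Hn He mem_iota andTb add0n; exact: Hq.
  have [ex' [s [H1 H2 H3 H4]]] := allacc_has Hall Hex Hh.
  apply: (IH _ _ H1) => //.
    move=> n; rewrite tb_setbit; case/orP => [/eqP -> //|]; exact: Hch.
  move: H3; rewrite mem_filter N.ldiff_spec => /andP [/andP [Hbs _] Hs].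
  have Hcs : ~~ N.testbit ch (N.of_nat s) by exact: land0 Hb Hbs.
  move: Hc; rewrite (count_split _ (pred1 s)).
  have -> : count (predI (fun n => q n && ~~ N.testbit ch (N.of_nat n)) (pred1 s)) (iota 0 27) = 1.
    rewrite (eq_count (a2 := pred1 s)); first by rewrite count_uniq_mem ?iota_uniq ?Hs.
    by move=> n /=; case: (eqVneq n s) => [->|]; rewrite ?andbT ?andbF ?H2 ?Hcs.
  rewrite add1n ltnS; apply: leq_trans; rewrite leq_eqVlt; apply/orP; left; apply/eqP.
  apply: eq_count => n /=; rewrite tb_setbit negb_or.
  by case: (eqVneq n s) => [->|] /=; rewrite ?andbF ?andbT.
Qed.

Definition SigP : seq (seq nat) :=
  [:: [:: 0; 1; 2; 4; 3; 5; 6; 8; 7];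
  [:: 0; 1; 2; 4; 3; 5; 7; 6; 8];
  [:: 0; 1; 2; 4; 3; 5; 8; 7; 6];
  [:: 3; 4; 5; 0; 1; 2; 7; 6; 8];
  [:: 3; 4; 5; 0; 1; 2; 6; 8; 7];
  [:: 3; 4; 5; 0; 1; 2; 8; 7; 6];
  [:: 0; 1; 2; 3; 4; 5; 6; 8; 7];
  [:: 0; 1; 2; 3; 4; 5; 7; 6; 8];
  [:: 0; 1; 2; 3; 4; 5; 8; 7; 6];
  [:: 3; 4; 5; 1; 0; 2; 7; 6; 8];
  [:: 3; 4; 5; 1; 0; 2; 8; 7; 6];
  [:: 3; 4; 5; 1; 0; 2; 6; 8; 7];
  [:: 7; 8; 6; 3; 4; 5; 2; 0; 1];
  [:: 6; 7; 8; 1; 0; 2; 5; 4; 3];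
  [:: 6; 8; 7; 0; 2; 1; 5; 4; 3];
  [:: 6; 7; 8; 3; 4; 5; 2; 1; 0];
  [:: 7; 8; 6; 0; 1; 2; 5; 4; 3];
  [:: 6; 8; 7; 3; 4; 5; 2; 0; 1];
  [:: 7; 8; 6; 3; 5; 4; 2; 0; 1];
  [:: 7; 8; 6; 0; 2; 1; 5; 4; 3];
  [:: 6; 7; 8; 4; 5; 3; 2; 0; 1];
  [:: 6; 8; 7; 0; 1; 2; 5; 4; 3];
  [:: 7; 8; 6; 4; 5; 3; 2; 0; 1];
  [:: 6; 7; 8; 1; 2; 0; 5; 4; 3];
  [:: 6; 8; 7; 4; 5; 3; 2; 0; 1];
  [:: 7; 8; 6; 1; 2; 0; 5; 3; 4];
  [:: 6; 7; 8; 3; 5; 4; 2; 1; 0];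
  [:: 6; 7; 8; 0; 2; 1; 5; 3; 4];
  [:: 6; 8; 7; 1; 2; 0; 5; 3; 4];
  [:: 6; 8; 7; 3; 5; 4; 2; 0; 1]].

Definition SigK : seq (seq nat) :=
  [:: [:: 3; 4; 5; 6; 7; 8; 0; 1; 2];
  [:: 0; 1; 2; 6; 7; 8; 3; 4; 5]].

Definition TAB : seq (seq nat) :=
  [:: [:: 1; 2; 0; 4; 5; 3; 6; 7; 8];
  [:: 1; 2; 0; 3; 5; 4; 6; 7; 8];
  [:: 1; 2; 0; 3; 4; 5; 6; 7; 8];
  [:: 1; 2; 0; 7; 8; 6; 3; 4; 5];
  [:: 1; 2; 0; 6; 8; 7; 3; 4; 5];
  [:: 1; 2; 0; 6; 7; 8; 3; 4; 5];
  [:: 0; 2; 1; 4; 5; 3; 6; 7; 8];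
  [:: 0; 2; 1; 3; 5; 4; 6; 7; 8];
  [:: 0; 2; 1; 3; 4; 5; 6; 7; 8];
  [:: 0; 2; 1; 7; 8; 6; 3; 4; 5];
  [:: 0; 2; 1; 6; 8; 7; 3; 4; 5];
  [:: 0; 2; 1; 6; 7; 8; 3; 4; 5];
  [:: 0; 1; 2; 4; 5; 3; 6; 7; 8];
  [:: 0; 1; 2; 3; 5; 4; 6; 7; 8];
  [:: 0; 1; 2; 3; 4; 5; 6; 7; 8];
  [:: 0; 1; 2; 7; 8; 6; 3; 4; 5];
  [:: 0; 1; 2; 6; 8; 7; 3; 4; 5];
  [:: 0; 1; 2; 6; 7; 8; 3; 4; 5];
  [:: 4; 5; 3; 7; 8; 6; 0; 1; 2];
  [:: 4; 5; 3; 6; 8; 7; 0; 1; 2];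
  [:: 4; 5; 3; 6; 7; 8; 0; 1; 2];
  [:: 3; 5; 4; 7; 8; 6; 0; 1; 2];
  [:: 3; 5; 4; 6; 8; 7; 0; 1; 2];
  [:: 3; 5; 4; 6; 7; 8; 0; 1; 2];
  [:: 3; 4; 5; 7; 8; 6; 0; 1; 2];
  [:: 3; 4; 5; 6; 8; 7; 0; 1; 2];
  [:: 3; 4; 5; 6; 7; 8; 0; 1; 2]].

Definition good (pi : seq nat) : bool :=
  [&& all (fun r => nth 0 pi r < 9) (iota 0 9),
      all (fun r => all (fun s => (nth 0 pi r == nth 0 pi s) == (r == s)) (iota 0 9)) (iota 0 9) &
      all (fun r => all (fun s => (part (nth 0 pi r) == part (nth 0 pi s)) == (part r == part s)) (iota 0 9)) (iota 0 9)].
Definition kAB : seq nat := [:: 0; 1; 2; 3; 4; 5; 6; 7; 8].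
Definition kAC : seq nat := [:: 0; 1; 2; 6; 7; 8; 3; 4; 5].
Definition kBC : seq nat := [:: 3; 4; 5; 6; 7; 8; 0; 1; 2].
Definition gsl (pi : seq nat) (n : nat) : nat :=
  idx (nth 0 pi (nth (0,0) SL n).1) (nth 0 pi (nth (0,0) SL n).2).
Definition c0 : nat := idx 2 5.
Definition ABm : seq nat := rem c0 (img Kpairs kAB).
Definition famC : seq N := [seq mask (img Ppairs s) | s <- SigP] ++ [seq mask (img Kpairs s) | s <- SigK].

Lemma hit_ok : hit famC 4 (mask [:: c0]) (mask ABm).
Proof. by vm_compute. Qed.

Lemma good_all : all good (SigP ++ SigK ++ [:: kAB; kAC; kBC]).
Proof. by vm_compute. Qed.

Lemma tab_ok : all (fun k => all (fun s0 => [&& good (nth [::] TAB s0), gsl (nth [::] TAB s0) c0 == s0,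
    all (fun s => (gsl (nth [::] TAB s0) s \in img Kpairs k) && (gsl (nth [::] TAB s0) s != s0)) ABm &
    perm_eq (map (gsl (nth [::] TAB s0)) (iota 0 27)) (iota 0 27)]) (img Kpairs k)) [:: kAB; kAC; kBC].
Proof. by vm_compute. Qed.

Lemma split_ok : perm_eq (iota 0 27) (img Kpairs kAB ++ img Kpairs kAC ++ img Kpairs kBC).
Proof. by vm_compute. Qed.

Lemma kuniq : all (fun k => uniq (img Kpairs k)) [:: kAB; kAC; kBC].
Proof. by vm_compute. Qed.

Lemma c0_in : c0 \in img Kpairs kAB.
Proof. by vm_compute. Qed.

Lemma SL_ok : all (fun p => [&& p.1 < 9, p.2 < 9 & p.1 != p.2]) SL.
Proof. by vm_compute. Qed.
Lemma SL_in : all (fun i => all (fun j => (part i != part j) ==> ((minn i j, maxn i j) \in SL)) (iota 0 9)) (iota 0 9).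
Proof. by vm_compute. Qed.

Lemma Ppairs_ok : all (fun p => [&& p.1 < 9, p.2 < 9 & part p.1 != part p.2]) (Ppairs ++ Kpairs).
Proof. by vm_compute. Qed.

Section Good.
Variable pi : seq nat.
Hypothesis Hg : good pi.
Lemma good_lt r : r < 9 -> nth 0 pi r < 9.
Proof. by case/and3P: Hg => /allP H _ _ Hr; apply: H; rewrite mem_iota. Qed.
Lemma good_inj r s : r < 9 -> s < 9 -> (nth 0 pi r == nth 0 pi s) = (r == s).
Proof.
case/and3P: Hg => _ H _ Hr Hs; have Hr' : r \in iota 0 9 by rewrite mem_iota.
have Hs' : s \in iota 0 9 by rewrite mem_iota.
by have /allP H' := allP H r Hr'; have := H' s Hs'; move/eqP.
Qed.
Lemma good_part r s : r < 9 -> s < 9 -> (part (nth 0 pi r) == part (nth 0 pi s)) = (part r == part s).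
Proof.
case/and3P: Hg => _ _ H Hr Hs; have Hr' : r \in iota 0 9 by rewrite mem_iota.
have Hs' : s \in iota 0 9 by rewrite mem_iota.
by have /allP H' := allP H r Hr'; have := H' s Hs'; move/eqP.
Qed.
End Good.

Lemma comp_inj pi sg : good pi -> good sg -> forall r s, r < 9 -> s < 9 ->
  (nth 0 pi (nth 0 sg r) == nth 0 pi (nth 0 sg s)) = (r == s).
Proof. by move=> Hp Hs r s Hr Hs'; rewrite good_inj ?good_lt // good_inj. Qed.
Lemma comp_part pi sg : good pi -> good sg -> forall r s, r < 9 -> s < 9 ->
  (part (nth 0 pi (nth 0 sg r)) == part (nth 0 pi (nth 0 sg s))) = (part r == part s).
Proof. by move=> Hp Hs r s Hr Hs'; rewrite good_part ?good_lt // good_part. Qed.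

Lemma idx_sym x y : idx x y = idx y x.
Proof. by rewrite /idx minnC maxnC. Qed.

Lemma idx_spec x y : x < 9 -> y < 9 -> part x != part y ->
  idx x y < 27 /\ nth (0,0) SL (idx x y) = (minn x y, maxn x y).
Proof.
move=> Hx Hy Hp.
have Hx' : x \in iota 0 9 by rewrite mem_iota.
have Hy' : y \in iota 0 9 by rewrite mem_iota.
have /allP H := allP SL_in x Hx'; have := H y Hy'; rewrite Hp /= => Hm.
by split; [rewrite -[27]/(size SL) index_mem | rewrite nth_index].
Qed.

Lemma count_one (q : pred nat) (S : seq nat) : uniq S -> count q S = 1 ->
  exists2 s0, s0 \in S & q s0 /\ forall s, s \in S -> s != s0 -> ~~ q s.
Proof.
move=> Hu Hc.
have : has q S by rewrite has_count Hc.
case/hasP => s0 Hs0 qs0; exists s0 => //; split => // s Hs ne.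
have := count_rem s0 q S; rewrite Hs0 qs0 Hc /= => Hr.
apply/negP => qs.
have : 0 < count q (rem s0 S) by rewrite -has_count; apply/hasP; exists s; rewrite ?rem_mem.
by rewrite Hr.
Qed.

Lemma nu4 (T : eqType) (a b c d : T) : ~~ uniq [:: a; b; c; d] ->
  a = b \/ a = c \/ a = d \/ b = c \/ b = d \/ c = d.
Proof.
move=> H.
case: (eqVneq a b) => [->|ab]; first by left.
case: (eqVneq a c) => [->|ac]; first by right; left.
case: (eqVneq a d) => [->|ad]; first by right; right; left.
case: (eqVneq b c) => [->|bc]; first by do 3 right; left.
case: (eqVneq b d) => [->|bd]; first by do 4 right; left.
case: (eqVneq c d) => [->|cd]; first by do 5 right.
by move: H; rewrite /= !inE (negbTE ab) (negbTE ac) (negbTE ad) (negbTE bc) (negbTE bd) (negbTE cd).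
Qed.

Lemma nu3 (T : eqType) (a b c : T) : ~~ uniq [:: a; b; c] -> a = b \/ a = c \/ b = c.
Proof.
move=> H.
case: (eqVneq a b) => [->|ab]; first by left.
case: (eqVneq a c) => [->|ac]; first by right; left.
case: (eqVneq b c) => [->|bc]; first by do 2 right.
by move: H; rewrite /= !inE (negbTE ab) (negbTE ac) (negbTE bc).
Qed.

Lemma logicP (T : Type) (c0 c1 c2 c3 c4 c5 c6 c7 c8 c9 c10 c11 c12 : T) :
  c0 <> c1 ->
  c0 <> c2 ->
  c0 <> c3 ->
  c0 <> c4 ->
  c0 <> c8 ->
  c0 <> c10 ->
  c1 <> c2 ->
  c1 <> c3 ->
  c1 <> c5 ->
  c1 <> c9 ->
  c1 <> c11 ->
  c2 <> c3 ->
  c2 <> c6 ->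
  c2 <> c12 ->
  c3 <> c7 ->
  c3 <> c10 ->
  c4 <> c5 ->
  c4 <> c6 ->
  c4 <> c7 ->
  c4 <> c8 ->
  c4 <> c10 ->
  c5 <> c6 ->
  c5 <> c7 ->
  c5 <> c9 ->
  c5 <> c11 ->
  c6 <> c7 ->
  c6 <> c12 ->
  c7 <> c10 ->
  c8 <> c9 ->
  c8 <> c10 ->
  c9 <> c11 ->
  c0 = c7 \/ c0 = c9 \/ c0 = c12 \/ c7 = c9 \/ c7 = c12 \/ c9 = c12 ->
  c0 = c7 \/ c0 = c11 \/ c0 = c12 \/ c7 = c11 \/ c7 = c12 \/ c11 = c12 ->
  c1 = c7 \/ c1 = c8 \/ c1 = c12 \/ c7 = c8 \/ c7 = c12 \/ c8 = c12 ->
  c2 = c7 \/ c2 = c8 \/ c2 = c11 \/ c7 = c8 \/ c7 = c11 \/ c8 = c11 ->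
  c3 = c4 \/ c3 = c9 \/ c3 = c12 \/ c4 = c9 \/ c4 = c12 \/ c9 = c12 ->
  c3 = c4 \/ c3 = c11 \/ c3 = c12 \/ c4 = c11 \/ c4 = c12 \/ c11 = c12 ->
  c3 = c5 \/ c3 = c8 \/ c3 = c12 \/ c5 = c8 \/ c5 = c12 \/ c8 = c12 ->
  c3 = c6 \/ c3 = c8 \/ c3 = c11 \/ c6 = c8 \/ c6 = c11 \/ c8 = c11 ->
  c3 = c8 \/ c3 = c11 \/ c3 = c12 \/ c8 = c11 \/ c8 = c12 \/ c11 = c12 ->
  c7 = c8 \/ c7 = c11 \/ c7 = c12 \/ c8 = c11 \/ c8 = c12 \/ c11 = c12 ->
  c0 = c6 \/ c0 = c9 \/ c6 = c9 ->
  c1 = c6 \/ c1 = c8 \/ c6 = c8 ->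
  c2 = c4 \/ c2 = c9 \/ c4 = c9 ->
  c2 = c5 \/ c2 = c8 \/ c5 = c8 ->
  c10 = c11 \/ c10 = c12 \/ c11 = c12 -> False.
Proof.
move=> A0 A1 A2 A3 A4 A5 A6 A7 A8 A9 A10 A11 A12 A13 A14 A15 A16 A17 A18 A19 A20 A21 A22 A23 A24 A25 A26 A27 A28 A29 A30 S0 S1 S2 S3 S4 S5 S6 S7 S8 S9 S10 S11 S12 S13 S14.
case: S10 => [?|[?|?]]; [(case: S11 => [?|[?|?]]; [congruence | (case: S13 => [?|[?|?]]; [(case: S12 => [?|[?|?]]; [congruence | congruence | (case: S0 => [?|[?|[?|[?|[?|?]]]]]; [congruence | congruence | congruence | congruence | (case: S6 => [?|[?|[?|[?|[?|?]]]]]; [congruence | congruence | congruence | congruence | congruence | (case: S14 => [?|[?|?]]; [(case: S5 => [?|[?|[?|[?|[?|?]]]]]; [(case: S7 => [?|[?|[?|[?|[?|?]]]]]; [congruence | congruence | congruence | congruence | congruence | congruence]) | congruence | congruence | congruence | congruence | congruence]) | congruence | congruence])]) | (case: S6 => [?|[?|[?|[?|[?|?]]]]]; [congruence | congruence | (case: S7 => [?|[?|[?|[?|[?|?]]]]]; [congruence | congruence | congruence | congruence | (case: S3 => [?|[?|[?|[?|[?|?]]]]]; [congruence | congruence | congruence | (case: S14 => [?|[?|?]]; [congruence | congruence | congruence]) | congruence | congruence]) | congruence]) | congruence | congruence | congruence])])]) | congruence | congruence]) | congruence]) | (case: S12 => [?|[?|?]]; [(case: S13 => [?|[?|?]]; [congruence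 | congruence | (case: S11 => [?|[?|?]]; [(case: S2 => [?|[?|[?|[?|[?|?]]]]]; [congruence | congruence | congruence | congruence | (case: S4 => [?|[?|[?|[?|[?|?]]]]]; [congruence | congruence | congruence | congruence | congruence | (case: S3 => [?|[?|[?|[?|[?|?]]]]]; [congruence | congruence | (case: S7 => [?|[?|[?|[?|[?|?]]]]]; [congruence | (case: S14 => [?|[?|?]]; [congruence | congruence | congruence]) | congruence | congruence | congruence | congruence]) | congruence | congruence | congruence])]) | (case: S4 => [?|[?|[?|[?|[?|?]]]]]; [congruence | congruence | (case: S14 => [?|[?|?]]; [(case: S1 => [?|[?|[?|[?|[?|?]]]]]; [(case: S3 => [?|[?|[?|[?|[?|?]]]]]; [congruence | congruence | congruence | congruence | congruence | congruence]) | congruence | congruence | congruence | congruence | congruence]) | congruence | congruence]) | congruence | congruence | congruence])]) | congruence | congruence])]) | congruence | congruence]) | (case: S11 => [?|[?|?]]; [congruence | (case: S12 => [?|[?|?]]; [(case: S13 => [?|[?|?]]; [congruence | congruence | congruence]) | congruence | congruence]) | congruence])].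
Qed.

Lemma logicK (T : Type) (c0 c1 c2 c3 c4 c5 c6 c7 c8 : T) :
  c0 <> c1 ->
  c0 <> c2 ->
  c0 <> c3 ->
  c0 <> c6 ->
  c1 <> c2 ->
  c1 <> c4 ->
  c1 <> c7 ->
  c2 <> c5 ->
  c2 <> c8 ->
  c3 <> c4 ->
  c3 <> c5 ->
  c3 <> c6 ->
  c4 <> c5 ->
  c4 <> c7 ->
  c5 <> c8 ->
  c6 <> c7 ->
  c6 <> c8 ->
  c7 <> c8 ->
  c0 = c4 \/ c0 = c8 \/ c4 = c8 ->
  c0 = c5 \/ c0 = c7 \/ c5 = c7 ->
  c1 = c3 \/ c1 = c8 \/ c3 = c8 ->
  c1 = c5 \/ c1 = c6 \/ c5 = c6 ->
  c2 = c3 \/ c2 = c7 \/ c3 = c7 ->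
  c2 = c4 \/ c2 = c6 \/ c4 = c6 -> False.
Proof.
move=> A0 A1 A2 A3 A4 A5 A6 A7 A8 A9 A10 A11 A12 A13 A14 A15 A16 A17 S0 S1 S2 S3 S4 S5.
case: S0 => [?|[?|?]]; [(case: S1 => [?|[?|?]]; [congruence | congruence | (case: S3 => [?|[?|?]]; [congruence | (case: S2 => [?|[?|?]]; [congruence | congruence | (case: S4 => [?|[?|?]]; [congruence | congruence | congruence])]) | congruence])]) | (case: S1 => [?|[?|?]]; [congruence | congruence | (case: S2 => [?|[?|?]]; [(case: S3 => [?|[?|?]]; [congruence | congruence | congruence]) | congruence | congruence])]) | (case: S2 => [?|[?|?]]; [(case: S3 => [?|[?|?]]; [congruence | congruence | (case: S1 => [?|[?|?]]; [congruence | (case: S4 => [?|[?|?]]; [congruence | congruence | congruence]) | congruence])]) | congruence | congruence])].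
Qed.

Section Model.
Variables (T : eqType) (pres : nat -> nat -> bool) (col : nat -> nat -> T).
Hypothesis Hsym : forall i j, pres i j = pres j i.
Hypothesis Hcsym : forall i j, pres i j -> col i j = col j i.
Hypothesis H1 : forall i j k, pres i j -> pres i k -> j != k -> col i j != col i k.
Hypothesis H2a : forall p1 q1 p2 q2 p3 q3 p4 q4,
  uniq [:: p1; q1; p2; q2; p3; q3; p4; q4] ->
  pres p1 q1 -> pres p2 q2 -> pres p3 q3 -> pres p4 q4 ->
  ~~ uniq [:: col p1 q1; col p2 q2; col p3 q3; col p4 q4].
Hypothesis H2b : forall p1 q1 p2 q2 p3 q3,
  uniq [:: p1; q1; p2; q2; p3; q3] ->
  pres p1 q1 -> pres p2 q2 -> pres p3 q3 ->
  all (fun x => (part x == part p1) || (part x == part q1)) [:: p2; q2; p3; q3] ->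
  ~~ uniq [:: col p1 q1; col p2 q2; col p3 q3].

Lemma adjc a b c d : pres a b -> pres c d ->
  [|| (a == c) && (b != d), (a == d) && (b != c), (b == c) && (a != d) | (b == d) && (a != c)] ->
  col a b != col c d.
Proof.
move=> Pab Pcd; case/or4P => [/andP [/eqP Eac Hbd]|/andP [/eqP Ead Hbc]|/andP [/eqP Ebc Had]|/andP [/eqP Ebd Hac]].
- subst c; exact: H1.
- subst d; rewrite (Hcsym Pcd); rewrite Hsym in Pcd; exact: H1.
- subst c; rewrite (Hcsym Pab); rewrite Hsym in Pab; exact: H1.
- subst d; rewrite (Hcsym Pab) (Hcsym Pcd); rewrite Hsym in Pab; rewrite Hsym in Pcd; exact: H1.
Qed.

Section Roles.
Variable v : nat -> nat.
Hypothesis Hinj : forall r s, r < 9 -> s < 9 -> (v r == v s) = (r == s).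
Hypothesis Hpart : forall r s, r < 9 -> s < 9 -> (part (v r) == part (v s)) = (part r == part s).

Lemma uv l : uniq l -> all (fun r => r < 9) l -> uniq (map v l).
Proof.
move=> Hu Ha; rewrite map_inj_in_uniq // => r s Hr Hs /eqP.
by rewrite Hinj ?(allP Ha) // => /eqP.
Qed.

Lemma forceP : all (fun p => pres (v p.1) (v p.2)) Ppairs -> False.
Proof.
move=> Hp.
have P0 : pres (v 0) (v 3) := allP Hp (0,3) (erefl true).
have P1 : pres (v 0) (v 4) := allP Hp (0,4) (erefl true).
have P2 : pres (v 0) (v 5) := allP Hp (0,5) (erefl true).
have P3 : pres (v 0) (v 6) := allP Hp (0,6) (erefl true).
have P4 : pres (v 1) (v 3) := allP Hp (1,3) (erefl true).
have P5 : pres (v 1) (v 4) := allP Hp (1,4) (erefl true).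
have P6 : pres (v 1) (v 5) := allP Hp (1,5) (erefl true).
have P7 : pres (v 1) (v 6) := allP Hp (1,6) (erefl true).
have P8 : pres (v 2) (v 3) := allP Hp (2,3) (erefl true).
have P9 : pres (v 2) (v 4) := allP Hp (2,4) (erefl true).
have P10 : pres (v 3) (v 6) := allP Hp (3,6) (erefl true).
have P11 : pres (v 4) (v 7) := allP Hp (4,7) (erefl true).
have P12 : pres (v 5) (v 8) := allP Hp (5,8) (erefl true).
have A0 : col (v 0) (v 3) != col (v 0) (v 4) by apply: (adjc P0 P1); rewrite !Hinj.
have A1 : col (v 0) (v 3) != col (v 0) (v 5) by apply: (adjc P0 P2); rewrite !Hinj.
have A2 : col (v 0) (v 3) != col (v 0) (v 6) by apply: (adjc P0 P3); rewrite !Hinj.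
have A3 : col (v 0) (v 3) != col (v 1) (v 3) by apply: (adjc P0 P4); rewrite !Hinj.
have A4 : col (v 0) (v 3) != col (v 2) (v 3) by apply: (adjc P0 P8); rewrite !Hinj.
have A5 : col (v 0) (v 3) != col (v 3) (v 6) by apply: (adjc P0 P10); rewrite !Hinj.
have A6 : col (v 0) (v 4) != col (v 0) (v 5) by apply: (adjc P1 P2); rewrite !Hinj.
have A7 : col (v 0) (v 4) != col (v 0) (v 6) by apply: (adjc P1 P3); rewrite !Hinj.
have A8 : col (v 0) (v 4) != col (v 1) (v 4) by apply: (adjc P1 P5); rewrite !Hinj.
have A9 : col (v 0) (v 4) != col (v 2) (v 4) by apply: (adjc P1 P9); rewrite !Hinj.
have A10 : col (v 0) (v 4) != col (v 4) (v 7) by apply: (adjc P1 P11); rewrite !Hinj.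
have A11 : col (v 0) (v 5) != col (v 0) (v 6) by apply: (adjc P2 P3); rewrite !Hinj.
have A12 : col (v 0) (v 5) != col (v 1) (v 5) by apply: (adjc P2 P6); rewrite !Hinj.
have A13 : col (v 0) (v 5) != col (v 5) (v 8) by apply: (adjc P2 P12); rewrite !Hinj.
have A14 : col (v 0) (v 6) != col (v 1) (v 6) by apply: (adjc P3 P7); rewrite !Hinj.
have A15 : col (v 0) (v 6) != col (v 3) (v 6) by apply: (adjc P3 P10); rewrite !Hinj.
have A16 : col (v 1) (v 3) != col (v 1) (v 4) by apply: (adjc P4 P5); rewrite !Hinj.
have A17 : col (v 1) (v 3) != col (v 1) (v 5) by apply: (adjc P4 P6); rewrite !Hinj.
have A18 : col (v 1) (v 3) != col (v 1) (v 6) by apply: (adjc P4 P7); rewrite !Hinj.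
have A19 : col (v 1) (v 3) != col (v 2) (v 3) by apply: (adjc P4 P8); rewrite !Hinj.
have A20 : col (v 1) (v 3) != col (v 3) (v 6) by apply: (adjc P4 P10); rewrite !Hinj.
have A21 : col (v 1) (v 4) != col (v 1) (v 5) by apply: (adjc P5 P6); rewrite !Hinj.
have A22 : col (v 1) (v 4) != col (v 1) (v 6) by apply: (adjc P5 P7); rewrite !Hinj.
have A23 : col (v 1) (v 4) != col (v 2) (v 4) by apply: (adjc P5 P9); rewrite !Hinj.
have A24 : col (v 1) (v 4) != col (v 4) (v 7) by apply: (adjc P5 P11); rewrite !Hinj.
have A25 : col (v 1) (v 5) != col (v 1) (v 6) by apply: (adjc P6 P7); rewrite !Hinj.
have A26 : col (v 1) (v 5) != col (v 5) (v 8) by apply: (adjc P6 P12); rewrite !Hinj.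
have A27 : col (v 1) (v 6) != col (v 3) (v 6) by apply: (adjc P7 P10); rewrite !Hinj.
have A28 : col (v 2) (v 3) != col (v 2) (v 4) by apply: (adjc P8 P9); rewrite !Hinj.
have A29 : col (v 2) (v 3) != col (v 3) (v 6) by apply: (adjc P8 P10); rewrite !Hinj.
have A30 : col (v 2) (v 4) != col (v 4) (v 7) by apply: (adjc P9 P11); rewrite !Hinj.
have S0 := nu4 (@H2a (v 0) (v 3) (v 1) (v 6) (v 2) (v 4) (v 5) (v 8) (uv (l := [:: 0; 3; 1; 6; 2; 4; 5; 8]) (erefl true) (erefl true)) P0 P7 P9 P12).
have S1 := nu4 (@H2a (v 0) (v 3) (v 1) (v 6) (v 4) (v 7) (v 5) (v 8) (uv (l := [:: 0; 3; 1; 6; 4; 7; 5; 8]) (erefl true) (erefl true)) P0 P7 P11 P12).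
have S2 := nu4 (@H2a (v 0) (v 4) (v 1) (v 6) (v 2) (v 3) (v 5) (v 8) (uv (l := [:: 0; 4; 1; 6; 2; 3; 5; 8]) (erefl true) (erefl true)) P1 P7 P8 P12).
have S3 := nu4 (@H2a (v 0) (v 5) (v 1) (v 6) (v 2) (v 3) (v 4) (v 7) (uv (l := [:: 0; 5; 1; 6; 2; 3; 4; 7]) (erefl true) (erefl true)) P2 P7 P8 P11).
have S4 := nu4 (@H2a (v 0) (v 6) (v 1) (v 3) (v 2) (v 4) (v 5) (v 8) (uv (l := [:: 0; 6; 1; 3; 2; 4; 5; 8]) (erefl true) (erefl true)) P3 P4 P9 P12).
have S5 := nu4 (@H2a (v 0) (v 6) (v 1) (v 3) (v 4) (v 7) (v 5) (v 8) (uv (l := [:: 0; 6; 1; 3; 4; 7; 5; 8]) (erefl true) (erefl true)) P3 P4 P11 P12).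
have S6 := nu4 (@H2a (v 0) (v 6) (v 1) (v 4) (v 2) (v 3) (v 5) (v 8) (uv (l := [:: 0; 6; 1; 4; 2; 3; 5; 8]) (erefl true) (erefl true)) P3 P5 P8 P12).
have S7 := nu4 (@H2a (v 0) (v 6) (v 1) (v 5) (v 2) (v 3) (v 4) (v 7) (uv (l := [:: 0; 6; 1; 5; 2; 3; 4; 7]) (erefl true) (erefl true)) P3 P6 P8 P11).
have S8 := nu4 (@H2a (v 0) (v 6) (v 2) (v 3) (v 4) (v 7) (v 5) (v 8) (uv (l := [:: 0; 6; 2; 3; 4; 7; 5; 8]) (erefl true) (erefl true)) P3 P8 P11 P12).
have S9 := nu4 (@H2a (v 1) (v 6) (v 2) (v 3) (v 4) (v 7) (v 5) (v 8) (uv (l := [:: 1; 6; 2; 3; 4; 7; 5; 8]) (erefl true) (erefl true)) P7 P8 P11 P12).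
have S10 := nu3 (@H2b (v 0) (v 3) (v 1) (v 5) (v 2) (v 4) (uv (l := [:: 0; 3; 1; 5; 2; 4]) (erefl true) (erefl true)) P0 P6 P9 (ltac:(by rewrite /= !Hpart))).
have S11 := nu3 (@H2b (v 0) (v 4) (v 1) (v 5) (v 2) (v 3) (uv (l := [:: 0; 4; 1; 5; 2; 3]) (erefl true) (erefl true)) P1 P6 P8 (ltac:(by rewrite /= !Hpart))).
have S12 := nu3 (@H2b (v 0) (v 5) (v 1) (v 3) (v 2) (v 4) (uv (l := [:: 0; 5; 1; 3; 2; 4]) (erefl true) (erefl true)) P2 P4 P9 (ltac:(by rewrite /= !Hpart))).
have S13 := nu3 (@H2b (v 0) (v 5) (v 1) (v 4) (v 2) (v 3) (uv (l := [:: 0; 5; 1; 4; 2; 3]) (erefl true) (erefl true)) P2 P5 P8 (ltac:(by rewrite /= !Hpart))).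
have S14 := nu3 (@H2b (v 3) (v 6) (v 4) (v 7) (v 5) (v 8) (uv (l := [:: 3; 6; 4; 7; 5; 8]) (erefl true) (erefl true)) P10 P11 P12 (ltac:(by rewrite /= !Hpart))).
exact: (logicP (elimN eqP A0) (elimN eqP A1) (elimN eqP A2) (elimN eqP A3) (elimN eqP A4) (elimN eqP A5) (elimN eqP A6) (elimN eqP A7) (elimN eqP A8) (elimN eqP A9) (elimN eqP A10) (elimN eqP A11) (elimN eqP A12) (elimN eqP A13) (elimN eqP A14) (elimN eqP A15) (elimN eqP A16) (elimN eqP A17) (elimN eqP A18) (elimN eqP A19) (elimN eqP A20) (elimN eqP A21) (elimN eqP A22) (elimN eqP A23) (elimN eqP A24) (elimN eqP A25) (elimN eqP A26) (elimN eqP A27) (elimN eqP A28) (elimN eqP A29) (elimN eqP A30) S0 S1 S2 S3 S4 S5 S6 S7 S8 S9 S10 S11 S12 S13 S14).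
Qed.

Lemma forceK : all (fun p => pres (v p.1) (v p.2)) Kpairs -> False.
Proof.
move=> Hp.
have P0 : pres (v 0) (v 3) := allP Hp (0,3) (erefl true).
have P1 : pres (v 0) (v 4) := allP Hp (0,4) (erefl true).
have P2 : pres (v 0) (v 5) := allP Hp (0,5) (erefl true).
have P3 : pres (v 1) (v 3) := allP Hp (1,3) (erefl true).
have P4 : pres (v 1) (v 4) := allP Hp (1,4) (erefl true).
have P5 : pres (v 1) (v 5) := allP Hp (1,5) (erefl true).
have P6 : pres (v 2) (v 3) := allP Hp (2,3) (erefl true).
have P7 : pres (v 2) (v 4) := allP Hp (2,4) (erefl true).
have P8 : pres (v 2) (v 5) := allP Hp (2,5) (erefl true).
have A0 : col (v 0) (v 3) != col (v 0) (v 4) by apply: (adjc P0 P1); rewrite !Hinj.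
have A1 : col (v 0) (v 3) != col (v 0) (v 5) by apply: (adjc P0 P2); rewrite !Hinj.
have A2 : col (v 0) (v 3) != col (v 1) (v 3) by apply: (adjc P0 P3); rewrite !Hinj.
have A3 : col (v 0) (v 3) != col (v 2) (v 3) by apply: (adjc P0 P6); rewrite !Hinj.
have A4 : col (v 0) (v 4) != col (v 0) (v 5) by apply: (adjc P1 P2); rewrite !Hinj.
have A5 : col (v 0) (v 4) != col (v 1) (v 4) by apply: (adjc P1 P4); rewrite !Hinj.
have A6 : col (v 0) (v 4) != col (v 2) (v 4) by apply: (adjc P1 P7); rewrite !Hinj.
have A7 : col (v 0) (v 5) != col (v 1) (v 5) by apply: (adjc P2 P5); rewrite !Hinj.
have A8 : col (v 0) (v 5) != col (v 2) (v 5) by apply: (adjc P2 P8); rewrite !Hinj.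
have A9 : col (v 1) (v 3) != col (v 1) (v 4) by apply: (adjc P3 P4); rewrite !Hinj.
have A10 : col (v 1) (v 3) != col (v 1) (v 5) by apply: (adjc P3 P5); rewrite !Hinj.
have A11 : col (v 1) (v 3) != col (v 2) (v 3) by apply: (adjc P3 P6); rewrite !Hinj.
have A12 : col (v 1) (v 4) != col (v 1) (v 5) by apply: (adjc P4 P5); rewrite !Hinj.
have A13 : col (v 1) (v 4) != col (v 2) (v 4) by apply: (adjc P4 P7); rewrite !Hinj.
have A14 : col (v 1) (v 5) != col (v 2) (v 5) by apply: (adjc P5 P8); rewrite !Hinj.
have A15 : col (v 2) (v 3) != col (v 2) (v 4) by apply: (adjc P6 P7); rewrite !Hinj.
have A16 : col (v 2) (v 3) != col (v 2) (v 5) by apply: (adjc P6 P8); rewrite !Hinj.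
have A17 : col (v 2) (v 4) != col (v 2) (v 5) by apply: (adjc P7 P8); rewrite !Hinj.
have S0 := nu3 (@H2b (v 0) (v 3) (v 1) (v 4) (v 2) (v 5) (uv (l := [:: 0; 3; 1; 4; 2; 5]) (erefl true) (erefl true)) P0 P4 P8 (ltac:(by rewrite /= !Hpart))).
have S1 := nu3 (@H2b (v 0) (v 3) (v 1) (v 5) (v 2) (v 4) (uv (l := [:: 0; 3; 1; 5; 2; 4]) (erefl true) (erefl true)) P0 P5 P7 (ltac:(by rewrite /= !Hpart))).
have S2 := nu3 (@H2b (v 0) (v 4) (v 1) (v 3) (v 2) (v 5) (uv (l := [:: 0; 4; 1; 3; 2; 5]) (erefl true) (erefl true)) P1 P3 P8 (ltac:(by rewrite /= !Hpart))).
have S3 := nu3 (@H2b (v 0) (v 4) (v 1) (v 5) (v 2) (v 3) (uv (l := [:: 0; 4; 1; 5; 2; 3]) (erefl true) (erefl true)) P1 P5 P6 (ltac:(by rewrite /= !Hpart))).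
have S4 := nu3 (@H2b (v 0) (v 5) (v 1) (v 3) (v 2) (v 4) (uv (l := [:: 0; 5; 1; 3; 2; 4]) (erefl true) (erefl true)) P2 P3 P7 (ltac:(by rewrite /= !Hpart))).
have S5 := nu3 (@H2b (v 0) (v 5) (v 1) (v 4) (v 2) (v 3) (uv (l := [:: 0; 5; 1; 4; 2; 3]) (erefl true) (erefl true)) P2 P4 P6 (ltac:(by rewrite /= !Hpart))).
exact: (logicK (elimN eqP A0) (elimN eqP A1) (elimN eqP A2) (elimN eqP A3) (elimN eqP A4) (elimN eqP A5) (elimN eqP A6) (elimN eqP A7) (elimN eqP A8) (elimN eqP A9) (elimN eqP A10) (elimN eqP A11) (elimN eqP A12) (elimN eqP A13) (elimN eqP A14) (elimN eqP A15) (elimN eqP A16) (elimN eqP A17) S0 S1 S2 S3 S4 S5).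
Qed.

End Roles.

Lemma pres_mm x y : pres (minn x y) (maxn x y) -> pres x y.
Proof. by case: leqP => _ //; rewrite Hsym. Qed.

Definition prs n := pres (nth (0,0) SL n).1 (nth (0,0) SL n).2.
Definition qq n := (n < 27) && ~~ prs n.

Lemma pres_of x y : x < 9 -> y < 9 -> part x != part y -> ~~ qq (idx x y) -> pres x y.
Proof.
move=> Hx Hy Hp; have [Hl Hn] := idx_spec Hx Hy Hp.
rewrite /qq Hl /= negbK /prs Hn /=; exact: pres_mm.
Qed.

Lemma k_has k : good k -> has qq (img Kpairs k).
Proof.
move=> Hk; apply/negPn/negP => /hasPn H.
apply: (forceK (v := nth 0 k) (good_inj Hk) (good_part Hk)).
apply/allP => p Hp.
have Hp' : p \in Ppairs ++ Kpairs by rewrite mem_cat Hp orbT.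
have /and3P [a b c] := allP Ppairs_ok p Hp'.
apply: pres_of; rewrite ?good_lt ?good_part //.
by apply: H; apply: (map_f (fun p => idx (nth 0 k p.1) (nth 0 k p.2)) Hp).
Qed.

Lemma img_pres (pi sg : seq nat) l (q' : pred nat) : good pi -> good sg ->
  all (fun p => [&& p.1 < 9, p.2 < 9 & part p.1 != part p.2]) l ->
  (forall n, q' n = (n < 27) && qq (gsl pi n)) ->
  (forall n, N.testbit (mask (img l sg)) (N.of_nat n) -> ~~ q' n) ->
  all (fun p => pres (nth 0 pi (nth 0 sg p.1)) (nth 0 pi (nth 0 sg p.2))) l.
Proof.
move=> Hpi Hsg Hl Hq' HS; apply/allP => p Hp.
have /and3P [a b c] := allP Hl p Hp.
set x := nth 0 sg p.1; set y := nth 0 sg p.2.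
have Hx : x < 9 by apply: good_lt.
have Hy : y < 9 by apply: good_lt.
have Hxy : part x != part y by rewrite /x /y good_part.
have [Hn Hsl] := idx_spec Hx Hy Hxy.
have Hb : N.testbit (mask (img l sg)) (N.of_nat (idx x y)).
  by rewrite tb_mask; apply: (map_f (fun p => idx (nth 0 sg p.1) (nth 0 sg p.2)) Hp).
have := HS _ Hb; rewrite Hq' Hn /= /gsl Hsl /= => Hnq.
apply: pres_of; rewrite ?good_lt ?good_part //.
case: (leqP x y) => Hle.
  have E1 : minn x y = x by apply/minn_idPl.
  have E2 : maxn x y = y by apply/maxn_idPr.
  by rewrite E1 E2 in Hnq.
have E1 : minn x y = y by apply/minn_idPr; exact: ltnW.
have E2 : maxn x y = x by apply/maxn_idPl; exact: ltnW.
by rewrite E1 E2 idx_sym in Hnq.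
Qed.

Lemma main_case k : k \in [:: kAB; kAC; kBC] -> count qq (img Kpairs k) = 1 ->
  count qq (iota 0 27) <= 5 -> False.
Proof.
move=> Hk Hc1 Hc5.
have uk : uniq (img Kpairs k) := allP kuniq k Hk.
have [s0 Hs0 [qs0 Hoth]] := count_one uk Hc1.
have /and4P [gpi Hg0 Hgm Hperm] := allP (allP tab_ok k Hk) s0 Hs0.
move: gpi Hg0 Hgm Hperm; set pi := nth [::] TAB s0 => gpi Hg0 Hgm Hperm.
pose q' n := (n < 27) && qq (gsl pi n).
have Hq'n : forall n, q' n -> n < 27 by move=> n /andP [].
have Hc0 : c0 < 27 by vm_compute.
have Hch : forall n, N.testbit (mask [:: c0]) (N.of_nat n) -> q' n.
  by move=> n; rewrite tb_mask inE => /eqP ->; rewrite /q' Hc0 (eqP Hg0) qs0.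
have Hex : forall n, N.testbit (mask ABm) (N.of_nat n) -> ~~ q' n.
  move=> n; rewrite tb_mask => Hn; have /andP [h1 h2] := allP Hgm n Hn.
  by rewrite /q' negb_and Hoth ?orbT.
have Hcnt : count (fun n => q' n && ~~ N.testbit (mask [:: c0]) (N.of_nat n)) (iota 0 27) <= 4.
  have E1 : count q' (iota 0 27) = count qq (iota 0 27).
    rewrite -(permP Hperm qq) count_map; apply: eq_in_count => n.
    by rewrite mem_iota => /andP [_ Hn]; rewrite /q' /= Hn.
  have := count_split q' (pred1 c0) (iota 0 27).
  have -> : count (predI q' (pred1 c0)) (iota 0 27) = 1.
    rewrite (eq_count (a2 := pred1 c0)); first by rewrite count_uniq_mem ?iota_uniq // mem_iota.
    move=> n /=; case: (eqVneq n c0) => [->|]; rewrite ?andbT ?andbF //.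
    by rewrite /q' Hc0 (eqP Hg0) qs0.
  have -> : count (predI q' (predC (pred1 c0))) (iota 0 27) =
            count (fun n => q' n && ~~ N.testbit (mask [:: c0]) (N.of_nat n)) (iota 0 27).
    by apply: eq_count => n; rewrite tb_mask mem_seq1.
  move=> H; lia.
have [S HS HSq] := hit_sound hit_ok Hch Hex Hq'n Hcnt.
have Hl : all (fun p => [&& p.1 < 9, p.2 < 9 & part p.1 != part p.2]) Ppairs.
  by move: Ppairs_ok; rewrite all_cat => /andP [].
have Hl' : all (fun p => [&& p.1 < 9, p.2 < 9 & part p.1 != part p.2]) Kpairs.
  by move: Ppairs_ok; rewrite all_cat => /andP [].
rewrite mem_cat in HS; case/orP: HS => /mapP [sg Hsg E]; subst S.
- have gsg : good sg by apply: (allP good_all); rewrite mem_cat Hsg.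
  apply: (forceP (v := fun r => nth 0 pi (nth 0 sg r)) (comp_inj gpi gsg) (comp_part gpi gsg)).
  exact: (img_pres gpi gsg Hl (fun n => erefl) HSq).
- have gsg : good sg by apply: (allP good_all); rewrite !mem_cat Hsg orbT.
  apply: (forceK (v := fun r => nth 0 pi (nth 0 sg r)) (comp_inj gpi gsg) (comp_part gpi gsg)).
  exact: (img_pres gpi gsg Hl' (fun n => erefl) HSq).
Qed.

Lemma arith3 (a b c t : nat) : 0 < a -> 0 < b -> 0 < c -> t = a + b + c -> t <= 5 ->
  (a = 1 -> False) -> (b = 1 -> False) -> (c = 1 -> False) -> False.
Proof.
move=> ha hb hc -> ht K1 K2 K3.
case: (eqVneq a 1) => [/K1 //|h1]; case: (eqVneq b 1) => [/K2 //|h2]; case: (eqVneq c 1) => [/K3 //|h3].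
move/eqP: h1 => h1; move/eqP: h2 => h2; move/eqP: h3 => h3; lia.
Qed.

Lemma finite_bound : count prs (iota 0 27) <= 21.
Proof.
rewrite leqNgt; apply/negP => Hc.
have Hcq : count qq (iota 0 27) <= 5.
  have -> : count qq (iota 0 27) = count (predC prs) (iota 0 27).
    by apply: eq_in_count => n; rewrite mem_iota => /andP [_ Hn]; rewrite /qq Hn.
  have := count_predC prs (iota 0 27); rewrite size_iota => E; lia.
have iAB : kAB \in [:: kAB; kAC; kBC] by rewrite inE eqxx.
have iAC : kAC \in [:: kAB; kAC; kBC] by rewrite !inE eqxx orbT.
have iBC : kBC \in [:: kAB; kAC; kBC] by rewrite !inE eqxx !orbT.
have gk : forall k, k \in [:: kAB; kAC; kBC] -> good k.
  by move=> k Hk; apply: (allP good_all); rewrite !mem_cat Hk !orbT.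
have hAB := k_has (gk _ iAB); have hAC := k_has (gk _ iAC); have hBC := k_has (gk _ iBC).
rewrite has_count in hAB; rewrite has_count in hAC; rewrite has_count in hBC.
have Hs : count qq (iota 0 27) = count qq (img Kpairs kAB) + count qq (img Kpairs kAC) + count qq (img Kpairs kBC).
  by rewrite (permP split_ok qq) !count_cat addnA.
have M1 := main_case iAB; have M2 := main_case iAC; have M3 := main_case iBC.
exact: (arith3 hAB hAC hBC Hs Hcq (fun h => M1 h Hcq) (fun h => M2 h Hcq) (fun h => M3 h Hcq)).
Qed.

End Model.

Lemma disjP' (T : finType) (X Y : {set T}) : (forall x, x \in X -> x \in Y -> False) -> [disjoint X & Y].
Proof. move=> H; rewrite -setI_eq0; apply/eqP/setP => x; rewrite !inE; apply/negbTE/negP => /andP [h1 h2]; exact: H h1 h2. Qed.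

Lemma disjE' (T : finType) (X Y : {set T}) x : [disjoint X & Y] -> x \in X -> x \in Y -> False.
Proof. rewrite -setI_eq0 => /eqP/setP/(_ x); rewrite !inE => H h1 h2; by rewrite h1 h2 in H. Qed.

Lemma card3 (T : finType) (a b c : T) : a != b -> a != c -> b != c -> #|[set a; b; c]| = 3.
Proof.
move=> ab ac bc; rewrite -setUA cardsU1 cards2 bc !inE negb_or ab ac.
by [].
Qed.

Lemma uniq_map_inj' (S R : eqType) (g : S -> R) s a b :
  uniq (map g s) -> a \in s -> b \in s -> g a = g b -> a = b.
Proof.
elim: s => //= x s IH /andP [Hx Hu]; rewrite !in_cons => /orP [/eqP ->|Ha] /orP [/eqP ->|Hb] // E.
- by move: Hx; rewrite E map_f.
- by move: Hx; rewrite -E map_f.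
- exact: IH.
Qed.

Lemma flat_pair_uniq (s : seq (nat * nat)) a b :
  uniq (flatten [seq [:: p.1; p.2] | p <- s]) ->
  a \in s -> b \in s -> a != b -> uniq [:: a.1; a.2; b.1; b.2].
Proof.
move=> Hu Ha Hb ab.
have Hb' : b \in rem a s by apply: rem_mem; rewrite // eq_sym.
have P : perm_eq s (a :: b :: rem b (rem a s)).
  apply: perm_trans (perm_to_rem Ha) _; by rewrite perm_cons perm_to_rem.
have := perm_flatten (perm_map (fun p : nat * nat => [:: p.1; p.2]) P).
move/perm_uniq => E; move: Hu; rewrite E => Hu'.
have : uniq ([:: a.1; a.2; b.1; b.2] ++ flatten [seq [:: p.1; p.2] | p <- rem b (rem a s)]) by [].
by rewrite cat_uniq => /andP [].
Qed.

Section Bridge.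
Variables (T : finType) (F M : {set {set T}}) (A B C : {set T}) (x0 : T).
Hypothesis HU : uniform3 F.
Hypothesis HL : linear_family F.
Hypothesis HMM : is_maximum_matching F M.
Hypotheses (HA : A \in M) (HB : B \in M) (HC : C \in M).
Hypotheses (AB : A != B) (AC : A != C) (BC : B != C).

Definition UU := A :|: B :|: C.
Definition DD := D2ABC F M A B C.
Definition memb (k : nat) := if k == 0 then A else if k == 1 then B else C.
Definition ff (n : nat) := nth x0 (enum (memb (part n))) (n %% 3).

Lemma HMF : M \subset F. Proof. by case: HMM => [[]]. Qed.
Lemma Hdisj X Y : X \in M -> Y \in M -> X != Y -> [disjoint X & Y].
Proof. by case: HMM => [[_ H] _]; apply: H. Qed.
Lemma memb_M k : memb k \in M. Proof. by rewrite /memb; case: ifP => _; [|case: ifP => _]. Qed.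
Lemma memb_card k : #|memb k| = 3. Proof. apply: HU; exact: (subsetP HMF _ (memb_M k)). Qed.
Lemma sub_XM Z : Z \in M -> Z \subset XM M.
Proof. by move=> HZ; rewrite /XM; apply: (bigcup_sup Z HZ). Qed.
Lemma memb_neq k l : k < 3 -> l < 3 -> k != l -> memb k != memb l.
Proof.
move: k l => [|[|[|k]]] [|[|[|l]]] //= _ _ _; rewrite /memb /=;
  by rewrite ?AB ?AC ?BC // eq_sym ?AB ?AC ?BC.
Qed.
Lemma memb_U k : memb k \subset UU.
Proof.
apply/subsetP => x; rewrite /memb /UU !inE.
by case: ifP => _; [|case: ifP => _] => ->; rewrite ?orbT.
Qed.
Lemma U_XM : UU \subset XM M.
Proof. by rewrite /UU !subUset !sub_XM. Qed.
Lemma U_memb x : x \in UU -> exists2 k, k < 3 & x \in memb k.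
Proof.
rewrite /UU !inE => /orP [/orP [H|H]|H]; [exists 0 | exists 1 | exists 2] => //.
Qed.

Lemma part_lt n : n < 9 -> part n < 3.
Proof. by move=> H; rewrite /part ltn_divLR. Qed.

Lemma f_memb n : ff n \in memb (part n).
Proof.
rewrite /ff -mem_enum; apply: mem_nth; by rewrite -cardE memb_card ltn_mod.
Qed.

Lemma f_U n : ff n \in UU.
Proof. exact: (subsetP (memb_U _) _ (f_memb n)). Qed.

Lemma f_inj i j : i < 9 -> j < 9 -> (ff i == ff j) = (i == j).
Proof.
move=> Hi Hj; apply/idP/idP => [/eqP E|/eqP -> //].
case: (eqVneq (part i) (part j)) => Hp.
- have : ff i == ff j by rewrite E.
  rewrite /ff Hp nth_uniq ?enum_uniq // -?cardE ?memb_card ?ltn_mod // => /eqP Em.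
  by rewrite (divn_eq i 3) (divn_eq j 3) -/(part i) -/(part j) Hp Em.
- have := Hdisj (memb_M (part i)) (memb_M (part j)) (memb_neq (part_lt Hi) (part_lt Hj) Hp).
  move/disjE'; move/(_ (ff i) (f_memb i)); rewrite E; move/(_ (f_memb j)) => [].
Qed.

Lemma f_surj u : u \in UU -> exists2 i, i < 9 & ff i = u.
Proof.
move=> /U_memb [k Hk Hu].
have Hx : index u (enum (memb k)) < 3 by rewrite -(memb_card k) cardE index_mem mem_enum.
exists (k * 3 + index u (enum (memb k))).
  by lia.
rewrite /ff /part divnMDl // divn_small // addn0 modnMDl modn_small //.
by rewrite nth_index // mem_enum.
Qed.

Lemma D_F E : E \in DD -> E \in F.
Proof. by rewrite /DD /D2ABC /D2 !inE => /andP [/andP []]. Qed.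
Lemma D_XM E : E \in DD -> #|E :&: XM M| = 2.
Proof. by rewrite /DD /D2ABC /D2 !inE => /andP [/andP [_ /eqP]]. Qed.
Lemma D_U E : E \in DD -> #|E :&: UU| = 2.
Proof. by rewrite /DD /D2ABC /D2 !inE => /andP [_ /eqP]. Qed.
Lemma D_EU E : E \in DD -> E :&: UU = E :&: XM M.
Proof. by move=> HE; apply/eqP; rewrite eqEcard setIS ?U_XM //= D_U ?D_XM. Qed.
Lemma D_inU E x : E \in DD -> x \in E -> x \in XM M -> x \in UU.
Proof. move=> HE h1 h2; have : x \in E :&: XM M by rewrite inE h1 h2.
by rewrite -D_EU // inE => /andP []. Qed.

Definition wE (E : {set T}) := odflt x0 [pick x in E | x \notin XM M].

Lemma D_diff E : E \in DD -> #|E :\: XM M| = 1.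
Proof.
move=> HE; have := cardsID (XM M) E; rewrite D_XM // (HU (D_F HE)).
move=> H; lia.
Qed.

Lemma wE_spec E : E \in DD -> wE E \in E /\ wE E \notin XM M.
Proof.
move=> HE; rewrite /wE; case: pickP => [w /andP [h1 h2] //|H].
have : 0 < #|E :\: XM M| by rewrite D_diff.
by move/card_gt0P => [w]; rewrite inE andbC H.
Qed.

Lemma wE_uniq E x : E \in DD -> x \in E -> x \notin XM M -> x = wE E.
Proof.
move=> HE h1 h2; have [w1 w2] := wE_spec HE.
have : #|E :\: XM M| <= 1 by rewrite D_diff.
move/card_le1_eqP; apply; by rewrite inE ?h1 ?h2 ?w1 ?w2.
Qed.

Lemma three_in E a b c : E \in DD -> a \in E -> b \in E -> c \in E ->
  a \in UU -> b \in UU -> c \in UU -> a != b -> a != c -> b != c -> False.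
Proof.
move=> HE ha hb hc ua ub uc ab ac bc.
have H : [set a; b; c] \subset E :&: UU.
  apply/subsetP => x Hx; rewrite in_setI; rewrite !inE in Hx.
  by case/orP: Hx => [/orP [] |] /eqP ->; rewrite ?ha ?hb ?hc ?ua ?ub ?uc.
by have := subset_leq_card H; rewrite card3 // D_U.
Qed.

Lemma uniqE E E' u v : E \in DD -> E' \in DD -> u != v ->
  u \in E -> v \in E -> u \in E' -> v \in E' -> E = E'.
Proof.
move=> HE HE' uv h1 h2 h3 h4; apply/eqP; apply/negP => /negP ne.
have := HL (D_F HE) (D_F HE') ne.
have : [set u; v] \subset E :&: E'.
  by apply/subsetP => x; rewrite !inE => /orP [] /eqP ->; rewrite ?h1 ?h2 ?h3 ?h4.
by move/subset_leq_card; rewrite cards2 uv => H1 H2; have := leq_trans H1 H2.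
Qed.

Definition pres (i j : nat) := [&& i < 9, j < 9, i != j & [exists E in DD, (ff i \in E) && (ff j \in E)]].
Definition Eo (i j : nat) := odflt set0 [pick E in DD | (ff i \in E) && (ff j \in E)].
Definition col (i j : nat) := wE (Eo i j).

Lemma Eo_spec i j : pres i j -> [/\ Eo i j \in DD, ff i \in Eo i j & ff j \in Eo i j].
Proof.
move=> /and4P [_ _ _ /existsP [E /andP [HE /andP [h1 h2]]]].
rewrite /Eo; case: pickP => [E' /andP [H1 /andP [H2 H3]] //|/(_ E)].
by rewrite HE h1 h2.
Qed.

Lemma pres_lt i j : pres i j -> [/\ i < 9, j < 9 & i != j].
Proof. by case/and4P. Qed.

Lemma pres_sym i j : pres i j = pres j i.
Proof.
rewrite /pres; apply/idP/idP => /and4P [a b c /existsP [E /andP [HE /andP [h1 h2]]]];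
  apply/and4P; split => //; rewrite 1?eq_sym //; apply/existsP; exists E; by rewrite HE h1 h2.
Qed.

Lemma Eo_sym i j : pres i j -> Eo i j = Eo j i.
Proof.
move=> P; have P' : pres j i by rewrite pres_sym.
have [d1 a1 b1] := Eo_spec P; have [d2 a2 b2] := Eo_spec P'.
have [Hi Hj ij] := pres_lt P.
by apply: (uniqE d1 d2 (u := ff i) (v := ff j)); rewrite ?f_inj.
Qed.

Lemma col_sym i j : pres i j -> col i j = col j i.
Proof. by move=> P; rewrite /col Eo_sym. Qed.

Lemma memEo p q t : pres p q -> t < 9 -> ff t \in Eo p q -> (t == p) || (t == q).
Proof.
move=> P Ht H; apply/negPn/negP; rewrite negb_or => /andP [tp tq].
have [d a b] := Eo_spec P; have [Hp Hq pq] := pres_lt P.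
by apply: (three_in d a b H); rewrite ?f_U ?f_inj // eq_sym.
Qed.

Lemma col_H1 i j k : pres i j -> pres i k -> j != k -> col i j != col i k.
Proof.
move=> Pij Pik jk; apply/negP => /eqP Hw.
have [d1 a1 b1] := Eo_spec Pij; have [d2 a2 b2] := Eo_spec Pik.
have [w1 nw1] := wE_spec d1; have [w2 nw2] := wE_spec d2.
have E12 : Eo i j = Eo i k.
  apply: (uniqE d1 d2 (u := ff i) (v := wE (Eo i j))) => //.
  - by apply/negP => /eqP E; move: nw1; rewrite -E (subsetP U_XM _ (f_U i)).
  - by rewrite /col in Hw; rewrite Hw.
have [Hi Hk ik] := pres_lt Pik; have [_ _ ij] := pres_lt Pij.
have := memEo Pij Hk; rewrite E12 => /(_ b2).
by rewrite eq_sym (negbTE ik) eq_sym (negbTE jk).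
Qed.

Lemma disjEo a b c d : pres a b -> pres c d -> uniq [:: a; b; c; d] ->
  col a b != col c d -> [disjoint Eo a b & Eo c d].
Proof.
move=> P1 P2 Hu Hc; apply: disjP' => x x1 x2.
have [d1 _ _] := Eo_spec P1; have [d2 _ _] := Eo_spec P2.
case: (boolP (x \in XM M)) => Hx.
- have [t Ht Et] := f_surj (D_inU d1 x1 Hx); subst x.
  have := memEo P1 Ht x1; have := memEo P2 Ht x2.
  move: Hu; rewrite /= !inE !negb_or => /andP [/and3P [n1 n2 n3] /andP [/andP [n4 n5] /andP [n6 _]]].
  by case/orP => /eqP -> /orP [] /eqP E; move: n2 n3 n4 n5; rewrite E eqxx.
- move/negP: Hc; apply; apply/eqP; rewrite /col.
  by rewrite -(wE_uniq d1 x1 Hx) -(wE_uniq d2 x2 Hx).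
Qed.

Lemma augment (R N : {set {set T}}) : R \subset M -> N \subset F ->
  (forall E E', E \in N -> E' \in N -> E != E' -> [disjoint E & E']) ->
  (forall E, E \in N -> E != set0) ->
  (forall E Z, E \in N -> Z \in M -> Z \notin R -> [disjoint E & Z]) ->
  #|R| < #|N| -> False.
Proof.
move=> HR HN Hd Hne HZ Hc.
set M' := (M :\: R) :|: N.
have Hm : is_matching F M'.
  split; first by rewrite subUset HN andbT (subset_trans (subsetDl _ _) HMF).
  move=> X Y; rewrite !inE => /orP [/andP [XR XM]|XN] /orP [/andP [YR YM]|YN] XY.
  - exact: Hdisj.
  - by rewrite disjoint_sym; apply: HZ.
  - exact: HZ.
  - exact: Hd.
have HI : (M :\: R) :&: N = set0.
  apply/setP => X; rewrite !inE; apply/negbTE/negP => /andP [/andP [XR XM] XN].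
  have := HZ X X XN XM XR; rewrite -setI_eq0 setIid => /eqP E.
  by move: (Hne X XN); rewrite E eqxx.
have := (proj2 HMM) M' Hm.
rewrite /M' cardsU HI cards0 subn0 cardsD (setIidPr HR).
have : #|R| <= #|M| by exact: subset_leq_card.
move=> H1 H2; lia.
Qed.

Lemma augment_pairs (R : {set {set T}}) (ps : seq (nat * nat)) : R \subset M ->
  uniq (flatten [seq [:: p.1; p.2] | p <- ps]) -> all (fun p => pres p.1 p.2) ps ->
  uniq [seq col p.1 p.2 | p <- ps] ->
  (forall p Z, p \in ps -> Z \in M -> Z \notin R -> [disjoint Eo p.1 p.2 & Z]) ->
  #|R| < size ps -> False.
Proof.
move=> HR Hu Hp Hc HZ Hs.
set N := [set E in [seq Eo p.1 p.2 | p <- ps]].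
have inN : forall E, E \in N -> exists2 p, p \in ps & E = Eo p.1 p.2.
  by move=> E; rewrite inE => /mapP.
have Hinj : {in ps &, injective (fun p : nat * nat => Eo p.1 p.2)}.
  move=> a b Ha Hb E; apply: (uniq_map_inj' Hc Ha Hb); by rewrite /col /= E.
have HcN : #|N| = size ps.
  by rewrite cardsE (card_uniqP _) ?size_map // map_inj_in_uniq // (map_uniq Hc).
apply: (augment (N := N) HR).
- apply/subsetP => E /inN [p Hp' ->]; have [d _ _] := Eo_spec (allP Hp p Hp'); exact: D_F d.
- move=> E E' /inN [a Ha ->] /inN [b Hb ->] ne.
  have ab : a != b by apply: contraNneq ne => ->.
  apply: disjEo; [exact: (allP Hp a Ha) | exact: (allP Hp b Hb) | exact: flat_pair_uniq Hu Ha Hb ab |].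
  by apply/negP => /eqP Ecl; move: ab; rewrite (uniq_map_inj' Hc Ha Hb Ecl) eqxx.
- move=> E /inN [p Hp' ->]; have [_ h _] := Eo_spec (allP Hp p Hp'); apply/set0Pn; by exists (ff p.1).
- move=> E Z /inN [p Hp' ->]; exact: HZ.
- by rewrite HcN.
Qed.

Lemma Eo_ZR (R : {set {set T}}) p q Z : pres p q -> Z \in M -> Z \notin R ->
  memb (part p) \in R -> memb (part q) \in R -> [disjoint Eo p q & Z].
Proof.
move=> P HZ HZR Rp Rq; apply: disjP' => x x1 x2.
have [d _ _] := Eo_spec P.
have [t Ht Et] := f_surj (D_inU d x1 (subsetP (sub_XM HZ) _ x2)); subst x.
have Rt : memb (part t) \in R by case/orP: (memEo P Ht x1) => /eqP ->.
have ne : memb (part t) != Z by apply: contraNneq HZR => <-.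
exact: (disjE' (Hdisj (memb_M _) HZ ne) (f_memb t) x2).
Qed.

Lemma cross_E E i j : E \in DD -> i < 9 -> j < 9 -> i != j -> ff i \in E -> ff j \in E -> part i != part j.
Proof.
move=> HE Hi Hj ij hi hj; apply/negP => /eqP Hp.
set Z := memb (part i).
have hZ : Z \in F by exact: (subsetP HMF _ (memb_M _)).
have Zi : ff i \in Z by exact: f_memb.
have Zj : ff j \in Z by rewrite /Z Hp f_memb.
case: (eqVneq E Z) => EZ.
- have : #|Z :&: UU| = 3 by rewrite (setIidPl (memb_U _)) memb_card.
  by rewrite -EZ D_U.
- have := HL (D_F HE) hZ EZ.
  have : [set ff i; ff j] \subset E :&: Z.
    by apply/subsetP => x; rewrite !inE => /orP [] /eqP ->; rewrite ?hi ?hj ?Zi ?Zj.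
  by move/subset_leq_card; rewrite cards2 f_inj // ij => H1 H2; have := leq_trans H1 H2.
Qed.

Lemma pres_cross i j : pres i j -> part i != part j.
Proof. move=> P; have [d a b] := Eo_spec P; have [Hi Hj ij] := pres_lt P; exact: (cross_E d). Qed.

Lemma memb_in3 k : memb k \in [set A; B; C].
Proof. by rewrite /memb !inE; case: ifP => _; [|case: ifP => _]; rewrite eqxx ?orbT. Qed.

Lemma col_H2a p1 q1 p2 q2 p3 q3 p4 q4 :
  uniq [:: p1; q1; p2; q2; p3; q3; p4; q4] ->
  pres p1 q1 -> pres p2 q2 -> pres p3 q3 -> pres p4 q4 ->
  ~~ uniq [:: col p1 q1; col p2 q2; col p3 q3; col p4 q4].
Proof.
move=> Hu P1 P2 P3 P4; apply/negP => Hc.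
apply: (augment_pairs (R := [set A; B; C]) (ps := [:: (p1,q1); (p2,q2); (p3,q3); (p4,q4)])) => //.
- by apply/subsetP => X; rewrite !inE => /orP [/orP []|] /eqP ->.
- by rewrite /= P1 P2 P3 P4.
- move=> p Z Hp HZ HZR; apply: (Eo_ZR _ HZ HZR (memb_in3 _) (memb_in3 _)).
  by move: Hp; rewrite !inE => /or4P [] /eqP ->.
- by rewrite card3.
Qed.

Lemma col_H2b p1 q1 p2 q2 p3 q3 :
  uniq [:: p1; q1; p2; q2; p3; q3] ->
  pres p1 q1 -> pres p2 q2 -> pres p3 q3 ->
  all (fun x => (part x == part p1) || (part x == part q1)) [:: p2; q2; p3; q3] ->
  ~~ uniq [:: col p1 q1; col p2 q2; col p3 q3].
Proof.
move=> Hu P1 P2 P3 Hpt; apply/negP => Hc.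
have [Hp1 Hq1 _] := pres_lt P1.
have Hall : forall x, x \in [:: p1; q1; p2; q2; p3; q3] -> memb (part x) \in [set memb (part p1); memb (part q1)].
  move=> x; rewrite !inE => /orP [/eqP ->|]; first by rewrite eqxx.
  case/orP => [/eqP ->|H]; first by rewrite eqxx orbT.
  have : x \in [:: p2; q2; p3; q3] by rewrite !inE.
  by move/(allP Hpt) => /orP [] /eqP ->; rewrite eqxx ?orbT.
apply: (augment_pairs (R := [set memb (part p1); memb (part q1)]) (ps := [:: (p1,q1); (p2,q2); (p3,q3)])) => //.
- by apply/subsetP => X; rewrite !inE => /orP [] /eqP ->; rewrite memb_M.
- by rewrite /= P1 P2 P3.
- move=> p Z Hp HZ HZR.
  have [P Hm1 Hm2] : [/\ pres p.1 p.2, p.1 \in [:: p1; q1; p2; q2; p3; q3] & p.2 \in [:: p1; q1; p2; q2; p3; q3]].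
    by move: Hp; rewrite !inE => /or3P [] /eqP -> /=; rewrite ?P1 ?P2 ?P3 !eqxx ?orbT.
  exact: (Eo_ZR P HZ HZR (Hall _ Hm1) (Hall _ Hm2)).
- by rewrite cards2 memb_neq ?part_lt ?pres_cross.
Qed.


Lemma count_D : #|DD| <= count (prs pres) (iota 0 27).
Proof.
pose pr (E : {set T}) (p : nat * nat) := (ff p.1 \in E) && (ff p.2 \in E).
pose phi E := find (pr E) SL.
have Hphi : forall E, E \in DD -> has (pr E) SL.
  move=> E HE; have /cards2P [u [v [uv Euv]]] : #|E :&: UU| == 2 by rewrite D_U.
  have hu : u \in E :&: UU by rewrite Euv !inE eqxx.
  have hv : v \in E :&: UU by rewrite Euv !inE eqxx orbT.
  move: hu hv; rewrite !in_setI => /andP [uE uU] /andP [vE vU].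
  have [i Hi Ei] := f_surj uU; have [j Hj Ej] := f_surj vU; subst u v.
  have ij : i != j by apply: contraNneq uv => ->.
  have Hp := cross_E HE Hi Hj ij uE vE.
  apply/hasP; exists (minn i j, maxn i j).
    have Hi' : i \in iota 0 9 by rewrite mem_iota.
    have Hj' : j \in iota 0 9 by rewrite mem_iota.
    have /allP H := allP SL_in i Hi'; by move: (H j Hj'); rewrite Hp.
  by rewrite /pr /=; case: leqP => _; rewrite ?uE ?vE.
have Hlt : forall E, E \in DD -> phi E < 27.
  by move=> E HE; rewrite -[27]/(size SL) -has_find Hphi.
have Hpr : forall E, E \in DD -> pr E (nth (0,0) SL (phi E)).
  by move=> E HE; apply: nth_find; apply: Hphi.
have Hprs : forall E, E \in DD -> prs pres (phi E).
  move=> E HE; have /andP [h1 h2] := Hpr E HE.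
  have /and3P [a b c] := allP SL_ok _ (mem_nth (0,0) (Hlt E HE : phi E < size SL)).
  rewrite /prs /pres a b c /=; apply/existsP; exists E; by rewrite HE h1 h2.
have Hinj : {in DD &, injective phi}.
  move=> E E' HE HE' Eq; have /andP [a1 a2] := Hpr E HE; have /andP [b1 b2] := Hpr E' HE'.
  rewrite Eq in a1 a2.
  have /and3P [x y z] := allP SL_ok _ (mem_nth (0,0) (Hlt E' HE' : phi E' < size SL)).
  by apply: (uniqE HE HE' (u := ff (nth (0,0) SL (phi E')).1) (v := ff (nth (0,0) SL (phi E')).2)); rewrite ?f_inj.
rewrite cardE -(size_map phi) -size_filter; apply: uniq_leq_size.
  by rewrite map_inj_in_uniq ?enum_uniq // => E E'; rewrite !mem_enum; exact: Hinj.
move=> n /mapP [E HE ->]; rewrite mem_enum in HE.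
by rewrite mem_filter Hprs // mem_iota /= Hlt.
Qed.

Lemma bridge_main : #|DD| <= 21.
Proof.
apply: leq_trans count_D _.
exact: (finite_bound pres_sym col_sym col_H1 col_H2a col_H2b).
Qed.

End Bridge.

Theorem proposition5 (T : finType) (F M : {set {set T}}) (A B C : {set T}) :
  uniform3 F -> linear_family F -> is_maximum_matching F M ->
  A \in M -> B \in M -> C \in M -> A != B -> A != C -> B != C ->
  #|D2ABC F M A B C| <= 21.
Proof.
move=> HU HL HMM HA HB HC AB AC BC.
have : 0 < #|A| by rewrite (HU A) //; exact: (subsetP (proj1 (proj1 HMM)) _ HA).
move/card_gt0P => [x0 _].
exact: (bridge_main x0 HU HL HMM HA HB HC AB AC BC).
Qed.
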